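(* Assume $d,s,c,v,p,\Delta\geq0$, $u^{\mathrm{REC}}>0$, $u^{\mathrm{CP}}>0$, $\gamma\in[0,1)$, and every facility cost function $f^{\mathrm{REC}}_{z,j},f^{\mathrm{CP}}_{z,k}:[0,\infty)\to\mathbb{R}$ is concave and monotonically increasing with value $0$ at $0$. Then problems (P) and (PMI) described in the context have the same optimal objective value.
   Context: Index sets (finite): chemistries $\mathcal{I}$; recycling processes $\mathcal{J}$; materials $\mathcal{K}\supseteq\mathcal{K}^{\mathrm{CP}}$ (cathode powders); zones $\mathcal{Z}$; periods $\mathcal{T}=\{1,\dots,T\}$; planning periods $\mathcal{L}=\{1,\dots,L\}$ with $\{\mathcal{T}_l\}$ a partition of $\mathcal{T}$ and $l_t$ the planning period containing $t$; $\sigma_t$ the stage of $t\in\mathcal{T}\cup\{0\}$; finite nonempty node sets $\Omega_\sigma$ with probabilities $p_\omega$; ancestor maps $a_\omega(t)\in\Omega_{\sigma_t}$ with $a_\omega(t)=\omega$ if $\omega\in\Omega_{\sigma_t}$; positive integers $N^{\mathrm{REC}}_l,N^{\mathrm{CP}}_{l,k}$, $\mathcal{N}^{\mathrm{REC}}_l=\{1,\dots,N^{\mathrm{REC}}_l\}$, $\mathcal{N}^{\mathrm{CP}}_{l,k}=\{1,\dots,N^{\mathrm{CP}}_{l,k}\}$. Data: $\Delta^{\mathrm{NB}},\Delta^{\mathrm{CP}},\Delta^{\mathrm{MC}},\Delta^{\mathrm{REC}}$, $d_{\omega,z,t,i}$, $s_{\omega,z,t,i}$, $u^{\mathrm{REC}},u^{\mathrm{CP}}$,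 costs $c^{\mathrm{NB,NM}}_{\omega,t,k},c^{\mathrm{CP,NM}}_{\omega,t,k},c^{\mathrm{MC}}_{\omega,z,t,k},c^{\mathrm{CP}}_{\omega,z,t,k},c^{\mathrm{REC}}_{\omega,z,t,i,j},c^{\mathrm{TR,RM}}_{z,z'},c^{\mathrm{TR,RB}}_{z,z'}$, values $v_{\omega,t,k}$, proportions $\eta\in[0,1]$, $\rho\geq0$, discount $\gamma$, facility cost functions $f^{\mathrm{REC}}_{z,j},f^{\mathrm{CP}}_{z,k}$. Operational variables $x\geq0$ (for $t\in\mathcal{T},z,\omega\in\Omega_{\sigma_t}$, inventories also at $t=0$): $x^{\mathrm{NM,NB}}_{\omega,z,t,k},x^{\mathrm{RM,INV}}_{\omega,z,t,k},x^{\mathrm{RM,S}}_{\omega,z,t,k},x^{\mathrm{INV}}_{\omega,z,t,k}$ ($k\in\mathcal{K}$); $x^{\mathrm{INV,NB}},x^{\mathrm{CP,INV}}$ ($k\in\mathcal{K}^{\mathrm{CP}}$); $x^{\mathrm{NM,CP}},x^{\mathrm{MC,CP}},x^{\mathrm{INV,MC}}$ ($k\notin\mathcal{K}^{\mathrm{CP}}$); $x^{\mathrm{RB}}_{\omega,z,t,i}$; $x^{\mathrm{RB,RM}}_{\omega,z,t,i,j}$; $x^{\mathrm{TR,RM}}_{\omega,z,z',t,k},x^{\mathrm{TR,RB}}_{\omega,z,z',t,i}$ ($z'\neq z$). Operational constraints (X): for all $t\in\mathcal{T},z,\omega\in\Omega_{\sigma_t}$: $\sum_i\Delta^{\mathrm{NB}}_{i,k}d_{\omega,z,t,i}=x^{\mathrm{NM,NB}}_{\omega,z,t,k}+x^{\mathrm{INV,NB}}_{\omega,z,t,k}$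 ($k\in\mathcal{K}^{\mathrm{CP}}$); $\sum_i\Delta^{\mathrm{NB}}_{i,k}d_{\omega,z,t,i}=x^{\mathrm{NM,NB}}_{\omega,z,t,k}$ ($k\notin\mathcal{K}^{\mathrm{CP}}$); $\sum_{k'\in\mathcal{K}^{\mathrm{CP}}}\Delta^{\mathrm{CP}}_{k',k}x^{\mathrm{CP,INV}}_{\omega,z,t,k'}=x^{\mathrm{NM,CP}}_{\omega,z,t,k}+x^{\mathrm{MC,CP}}_{\omega,z,t,k}$ ($k\notin\mathcal{K}^{\mathrm{CP}}$); $\sum_{k'\notin\mathcal{K}^{\mathrm{CP}}}\Delta^{\mathrm{MC}}_{k',k}x^{\mathrm{MC,CP}}_{\omega,z,t,k'}=x^{\mathrm{INV,MC}}_{\omega,z,t,k}$ ($k\notin\mathcal{K}^{\mathrm{CP}}$); $x^{\mathrm{RM,INV}}_{\omega,z,t,k}+x^{\mathrm{RM,S}}_{\omega,z,t,k}=\sum_{i,j}\Delta^{\mathrm{REC}}_{k,i,j}x^{\mathrm{RB,RM}}_{\omega,z,t,i,j}$; $x^{\mathrm{RB}}_{\omega,z,0,i}=0$, $x^{\mathrm{INV}}_{\omega,z,0,k}=0$ for $\omega\in\Omega_{\sigma_0}$; with $\omega'=a_\omega(t-1)$: $x^{\mathrm{RB}}_{\omega,z,t,i}=x^{\mathrm{RB}}_{\omega',z,t-1,i}+\sum_{z'\neq z}(x^{\mathrm{TR,RB}}_{\omega,z',z,t,i}-x^{\mathrm{TR,RB}}_{\omega,z,z',t,i})+s_{\omega,z,t,i}-\sum_jx^{\mathrm{RB,RM}}_{\omega,z,t,i,j}$;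 $x^{\mathrm{INV}}_{\omega,z,t,k}=x^{\mathrm{INV}}_{\omega',z,t-1,k}+\sum_{z'\neq z}(x^{\mathrm{TR,RM}}_{\omega,z',z,t,k}-x^{\mathrm{TR,RM}}_{\omega,z,z',t,k})+x^{\mathrm{RM,INV}}_{\omega,z,t,k}-x^{\mathrm{INV,MC}}_{\omega,z,t,k}$ for $k\notin\mathcal{K}^{\mathrm{CP}}$, and for $k\in\mathcal{K}^{\mathrm{CP}}$ the same with $-x^{\mathrm{INV,MC}}_{\omega,z,t,k}$ replaced by $+x^{\mathrm{CP,INV}}_{\omega,z,t,k}-x^{\mathrm{INV,NB}}_{\omega,z,t,k}$. Operational cost: $C^{\mathrm{OP}}_{\omega,t}(x)=\sum_{z}\Big(\sum_{k\in\mathcal{K}}c^{\mathrm{NB,NM}}_{\omega,t,k}x^{\mathrm{NM,NB}}_{\omega,z,t,k}+\sum_{k\notin\mathcal{K}^{\mathrm{CP}}}(c^{\mathrm{CP,NM}}_{\omega,t,k}x^{\mathrm{NM,CP}}_{\omega,z,t,k}+c^{\mathrm{MC}}_{\omega,z,t,k}x^{\mathrm{MC,CP}}_{\omega,z,t,k})+\sum_{k}v_{\omega,t,k}(\rho x^{\mathrm{INV}}_{\omega,z,t,k}-\eta x^{\mathrm{RM,S}}_{\omega,z,t,k})+\sum_{k\in\mathcal{K}^{\mathrm{CP}}}c^{\mathrm{CP}}_{\omega,z,t,k}x^{\mathrm{CP,INV}}_{\omega,z,t,k}+\sum_{i,j}c^{\mathrm{REC}}_{\omega,z,t,i,j}x^{\mathrm{RB,RM}}_{\omega,z,t,i,j}+\sum_{z'\neq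 z}(\sum_kc^{\mathrm{TR,RM}}_{z,z'}x^{\mathrm{TR,RM}}_{\omega,z,z',t,k}+\sum_ic^{\mathrm{TR,RB}}_{z,z'}x^{\mathrm{TR,RB}}_{\omega,z,z',t,i})\Big)$. Problem (P): variables $x$ and $y^{\mathrm{REC}}_{z,l,j,n}\geq0$ ($n\in\mathcal{N}^{\mathrm{REC}}_l$), $y^{\mathrm{CP}}_{z,l,k,n}\geq0$ ($k\in\mathcal{K}^{\mathrm{CP}},n\in\mathcal{N}^{\mathrm{CP}}_{l,k}$); constraints (X) together with $\sum_ny^{\mathrm{REC}}_{z,l,j,n}\geq\sum_ix^{\mathrm{RB,RM}}_{\omega,z,t,i,j}$ and $\sum_ny^{\mathrm{CP}}_{z,l,k,n}\geq x^{\mathrm{CP,INV}}_{\omega,z,t,k}$ for all $t\in\mathcal{T}_l,\omega\in\Omega_{\sigma_t}$; $\sum_{n\in\mathcal{N}^{\mathrm{REC}}_l}y^{\mathrm{REC}}_{z,l,j,n}\geq\sum_{n\in\mathcal{N}^{\mathrm{REC}}_{l-1}}y^{\mathrm{REC}}_{z,l-1,j,n}$, $\sum_{n\in\mathcal{N}^{\mathrm{CP}}_{l,k}}y^{\mathrm{CP}}_{z,l,k,n}\geq\sum_{n\in\mathcal{N}^{\mathrm{CP}}_{l-1,k}}y^{\mathrm{CP}}_{z,l-1,k,n}$ ($l\geq2$); $y^{\mathrm{REC}}_{z,l,j,n}\leq u^{\mathrm{REC}}$, $y^{\mathrm{CP}}_{z,l,k,n}\leq u^{\mathrm{CP}}$.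 Objective: minimize $\sum_t(1-\gamma)^{t-1}\big(C^{\mathrm{PL}}_t(y)+\sum_{\omega\in\Omega_{\sigma_t}}p_\omega C^{\mathrm{OP}}_{\omega,t}(x)\big)$ with $C^{\mathrm{PL}}_t(y)=\sum_z\big(\sum_j\sum_{n\in\mathcal{N}^{\mathrm{REC}}_{l_t}}f^{\mathrm{REC}}_{z,j}(y^{\mathrm{REC}}_{z,l_t,j,n})+\sum_{k\in\mathcal{K}^{\mathrm{CP}}}\sum_{n\in\mathcal{N}^{\mathrm{CP}}_{l_t,k}}f^{\mathrm{CP}}_{z,k}(y^{\mathrm{CP}}_{z,l_t,k,n})\big)$. Problem (PMI): variables $x$ and, for each $z,l,j$, an integer $y^{\mathrm{REC}}_{z,l,j}\in\{0,\dots,N^{\mathrm{REC}}_l-1\}$ and a real $y^{\mathrm{REC}}_{z,l,j,+}\in[0,u^{\mathrm{REC}}]$, and for each $z,l,k\in\mathcal{K}^{\mathrm{CP}}$ an integer $y^{\mathrm{CP}}_{z,l,k}\in\{0,\dots,N^{\mathrm{CP}}_{l,k}-1\}$ and a real $y^{\mathrm{CP}}_{z,l,k,+}\in[0,u^{\mathrm{CP}}]$; constraints (X) together with $u^{\mathrm{REC}}y^{\mathrm{REC}}_{z,l,j}+y^{\mathrm{REC}}_{z,l,j,+}\geq\sum_ix^{\mathrm{RB,RM}}_{\omega,z,t,i,j}$ and $u^{\mathrm{CP}}y^{\mathrm{CP}}_{z,l,k}+y^{\mathrm{CP}}_{z,l,k,+}\geq x^{\mathrm{CP,INV}}_{\omega,z,t,k}$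 for all $t\in\mathcal{T}_l,\omega\in\Omega_{\sigma_t}$; $u^{\mathrm{REC}}y^{\mathrm{REC}}_{z,l,j}+y^{\mathrm{REC}}_{z,l,j,+}\geq u^{\mathrm{REC}}y^{\mathrm{REC}}_{z,l-1,j}+y^{\mathrm{REC}}_{z,l-1,j,+}$ and $u^{\mathrm{CP}}y^{\mathrm{CP}}_{z,l,k}+y^{\mathrm{CP}}_{z,l,k,+}\geq u^{\mathrm{CP}}y^{\mathrm{CP}}_{z,l-1,k}+y^{\mathrm{CP}}_{z,l-1,k,+}$ ($l\geq2$). Objective: minimize $\sum_t(1-\gamma)^{t-1}\big(\overline{C}^{\mathrm{PL}}_t(y)+\sum_{\omega\in\Omega_{\sigma_t}}p_\omega C^{\mathrm{OP}}_{\omega,t}(x)\big)$ with $\overline{C}^{\mathrm{PL}}_t(y)=\sum_z\big(\sum_j(f^{\mathrm{REC}}_{z,j}(y^{\mathrm{REC}}_{z,l_t,j,+})+y^{\mathrm{REC}}_{z,l_t,j}f^{\mathrm{REC}}_{z,j}(u^{\mathrm{REC}}))+\sum_{k\in\mathcal{K}^{\mathrm{CP}}}(f^{\mathrm{CP}}_{z,k}(y^{\mathrm{CP}}_{z,l_t,k,+})+y^{\mathrm{CP}}_{z,l_t,k}f^{\mathrm{CP}}_{z,k}(u^{\mathrm{CP}}))\big)$. *)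

(* Defs.v *)
From mathcomp Require Import all_boot all_order all_algebra.
From mathcomp Require Import boolp classical_sets reals constructive_ereal ereal.
Local Open Scope classical_set_scope.
Set Implicit Arguments. Unset Strict Implicit. Unset Printing Implicit Defensive.
Import Order.TTheory GRing.Theory Num.Theory.
Local Open Scope ring_scope.

(* I = chemistries, J = recycling processes, K = materials,
   Z = zones, W = (all) scenario-tree nodes, Sg = stages.
   Periods are the naturals 1..nT (with 0 for initial inventories),
   planning periods the naturals 1..nL.                                  *)
Record instance (R : realType) (I J K Z W : finType) (Sg : Type) := Instance {
  KCP   : {set K};
  nT    : nat;
  nL    : nat;
  lper  : nat -> nat;
  sigma : nat -> Sg;
  Omega : Sg -> {set W};
  prob  : W -> R;
  anc   : W -> nat -> W;
  NREC  : nat -> nat;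
  NCP   : nat -> K -> nat;
  DNB   : I -> K -> R;
  DCP   : K -> K -> R;
  DMC   : K -> K -> R;
  DREC  : K -> I -> J -> R;
  dem   : W -> Z -> nat -> I -> R;
  sup   : W -> Z -> nat -> I -> R;
  uREC  : R;
  uCP   : R;
  cNBNM : W -> nat -> K -> R;
  cCPNM : W -> nat -> K -> R;
  cMC   : W -> Z -> nat -> K -> R;
  cCP   : W -> Z -> nat -> K -> R;
  cREC  : W -> Z -> nat -> I -> J -> R;
  cTRRM : Z -> Z -> R;
  cTRRB : Z -> Z -> R;
  val   : W -> nat -> K -> R;
  eta   : R;
  rho   : R;
  gamma : R;
  fREC  : Z -> J -> R -> R;
  fCP   : Z -> K -> R -> R
}.

(* Operational decision variables x.  Transport variables
   xTRRM w z z' t k is x^{TR,RM}_{w,z,z',t,k} (from z to z'); the diagonal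
   z = z' is never used. *)
Record opvars (R : realType) (I J K Z W : finType) := OpVars {
  xNMNB : W -> Z -> nat -> K -> R;
  xRMINV : W -> Z -> nat -> K -> R;
  xRMS  : W -> Z -> nat -> K -> R;
  xINV  : W -> Z -> nat -> K -> R;
  xINVNB : W -> Z -> nat -> K -> R;
  xCPINV : W -> Z -> nat -> K -> R;
  xNMCP : W -> Z -> nat -> K -> R;
  xMCCP : W -> Z -> nat -> K -> R;
  xINVMC : W -> Z -> nat -> K -> R;
  xRB   : W -> Z -> nat -> I -> R;
  xRBRM : W -> Z -> nat -> I -> J -> R;
  xTRRM : W -> Z -> Z -> nat -> K -> R;
  xTRRB : W -> Z -> Z -> nat -> I -> R
}.

Record plvars (R : realType) (J K Z : finType) := PlVars {
  yREC : Z -> nat -> J -> nat -> R;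
  yCP  : Z -> nat -> K -> nat -> R
}.

(* Planning variables of (PMI): integer parts (as naturals) and real parts. *)
Record mivars (R : realType) (J K Z : finType) := MiVars {
  nREC  : Z -> nat -> J -> nat;
  yRECp : Z -> nat -> J -> R;
  nCPi  : Z -> nat -> K -> nat;
  yCPp  : Z -> nat -> K -> R
}.

Section Problems.
Variables (R : realType) (I J K Z W : finType) (Sg : Type).
Variable D : instance R I J K Z W Sg.

Local Notation T := (nT D).
Local Notation L := (nL D).
Local Notation Om t := (Omega D (sigma D t)).

Definition wf_instance : Prop :=
  (* {T_l} is a partition of {1..T} into L (nonempty) blocks, l_t its index *)
  (forall t, (1 <= t <= T)%N -> (1 <= lper D t <= L)%N) /\
  (forall l, (1 <= l <= L)%N -> exists t, (1 <= t <= T)%N /\ lper D t = l) /\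
  (forall t, (t <= T)%N -> Om t != finset.set0) /\
  (forall w, 0 <= prob D w) /\
  (forall t, (t <= T)%N -> \sum_(w in Om t) prob D w = 1) /\
  (forall w t, (t <= T)%N -> anc D w t \in Om t) /\
  (forall w t, (t <= T)%N -> w \in Om t -> anc D w t = w) /\
  (forall l, (1 <= l <= L)%N -> (0 < NREC D l)%N) /\
  (forall l k, (1 <= l <= L)%N -> k \in KCP D -> (0 < NCP D l k)%N) /\
  0 <= eta D <= 1 /\ 0 <= rho D.

Definition data_nonneg : Prop :=
  (forall w z t i, 0 <= dem D w z t i) /\
  (forall w z t i, 0 <= sup D w z t i) /\
  (forall w t k, 0 <= cNBNM D w t k) /\
  (forall w t k, 0 <= cCPNM D w t k) /\
  (forall w z t k, 0 <= cMC D w z t k) /\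
  (forall w z t k, 0 <= cCP D w z t k) /\
  (forall w z t i j, 0 <= cREC D w z t i j) /\
  (forall z z', 0 <= cTRRM D z z') /\
  (forall z z', 0 <= cTRRB D z z') /\
  (forall w t k, 0 <= val D w t k) /\
  (forall w, 0 <= prob D w) /\
  (forall i k, 0 <= DNB D i k) /\
  (forall k' k, 0 <= DCP D k' k) /\
  (forall k' k, 0 <= DMC D k' k) /\
  (forall k i j, 0 <= DREC D k i j).

Definition op_feasible (x : opvars R I J K Z W) : Prop :=
  (forall t w z, (t <= T)%N -> w \in Om t ->
     (forall k, 0 <= xNMNB x w z t k /\ 0 <= xRMINV x w z t k /\
                0 <= xRMS x w z t k /\ 0 <= xINV x w z t k /\
                0 <= xINVNB x w z t k /\ 0 <= xCPINV x w z t k /\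
                0 <= xNMCP x w z t k /\ 0 <= xMCCP x w z t k /\
                0 <= xINVMC x w z t k) /\
     (forall i, 0 <= xRB x w z t i) /\
     (forall i j, 0 <= xRBRM x w z t i j) /\
     (forall z' k, z' != z -> 0 <= xTRRM x w z z' t k) /\
     (forall z' i, z' != z -> 0 <= xTRRB x w z z' t i)) /\
  (forall w z, w \in Om 0 ->
     (forall i, xRB x w z 0 i = 0) /\ (forall k, xINV x w z 0 k = 0)) /\
  (forall t w z, (1 <= t <= T)%N -> w \in Om t ->
     let w' := anc D w t.-1 in
     (forall k, k \in KCP D ->
        \sum_i DNB D i k * dem D w z t i = xNMNB x w z t k + xINVNB x w z t k) /\
     (forall k, k \notin KCP D ->
        \sum_i DNB D i k * dem D w z t i = xNMNB x w z t k) /\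
     (forall k, k \notin KCP D ->
        \sum_(k' in KCP D) DCP D k' k * xCPINV x w z t k'
          = xNMCP x w z t k + xMCCP x w z t k) /\
     (forall k, k \notin KCP D ->
        \sum_(k' | k' \notin KCP D) DMC D k' k * xMCCP x w z t k'
          = xINVMC x w z t k) /\
     (forall k, xRMINV x w z t k + xRMS x w z t k
          = \sum_i \sum_j DREC D k i j * xRBRM x w z t i j) /\
     (forall i, xRB x w z t i =
          xRB x w' z t.-1 i
          + \sum_(z' | z' != z) (xTRRB x w z' z t i - xTRRB x w z z' t i)
          + sup D w z t i - \sum_j xRBRM x w z t i j) /\
     (forall k, k \notin KCP D -> xINV x w z t k =
          xINV x w' z t.-1 k
          + \sum_(z' | z' != z) (xTRRM x w z' z t k - xTRRM x w z z' t k)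
          + xRMINV x w z t k - xINVMC x w z t k) /\
     (forall k, k \in KCP D -> xINV x w z t k =
          xINV x w' z t.-1 k
          + \sum_(z' | z' != z) (xTRRM x w z' z t k - xTRRM x w z z' t k)
          + xRMINV x w z t k + xCPINV x w z t k - xINVNB x w z t k)).

Definition COP (x : opvars R I J K Z W) (w : W) (t : nat) : R :=
  \sum_z (
    \sum_k cNBNM D w t k * xNMNB x w z t k
  + \sum_(k | k \notin KCP D)
       (cCPNM D w t k * xNMCP x w z t k + cMC D w z t k * xMCCP x w z t k)
  + \sum_k val D w t k * (rho D * xINV x w z t k - eta D * xRMS x w z t k)
  + \sum_(k in KCP D) cCP D w z t k * xCPINV x w z t k
  + \sum_i \sum_j cREC D w z t i j * xRBRM x w z t i j
  + \sum_(z' | z' != z)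
       (\sum_k cTRRM D z z' * xTRRM x w z z' t k
        + \sum_i cTRRB D z z' * xTRRB x w z z' t i)).

Definition P_feasible (x : opvars R I J K Z W) (y : plvars R J K Z) : Prop :=
  op_feasible x /\
  (forall z l j n, (1 <= l <= L)%N -> (1 <= n <= NREC D l)%N ->
     0 <= yREC y z l j n <= uREC D) /\
  (forall z l k n, (1 <= l <= L)%N -> k \in KCP D -> (1 <= n <= NCP D l k)%N ->
     0 <= yCP y z l k n <= uCP D) /\
  (forall t w z j, (1 <= t <= T)%N -> w \in Om t ->
     \sum_i xRBRM x w z t i j
       <= \sum_(1 <= n < (NREC D (lper D t)).+1) yREC y z (lper D t) j n) /\
  (forall t w z k, (1 <= t <= T)%N -> w \in Om t -> k \in KCP D ->
     xCPINV x w z t k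
       <= \sum_(1 <= n < (NCP D (lper D t) k).+1) yCP y z (lper D t) k n) /\
  (forall z l j, (2 <= l <= L)%N ->
     \sum_(1 <= n < (NREC D l.-1).+1) yREC y z l.-1 j n
       <= \sum_(1 <= n < (NREC D l).+1) yREC y z l j n) /\
  (forall z l k, (2 <= l <= L)%N -> k \in KCP D ->
     \sum_(1 <= n < (NCP D l.-1 k).+1) yCP y z l.-1 k n
       <= \sum_(1 <= n < (NCP D l k).+1) yCP y z l k n).

Definition CPL (y : plvars R J K Z) (t : nat) : R :=
  \sum_z (\sum_j \sum_(1 <= n < (NREC D (lper D t)).+1)
              fREC D z j (yREC y z (lper D t) j n)
        + \sum_(k in KCP D) \sum_(1 <= n < (NCP D (lper D t) k).+1)
              fCP D z k (yCP y z (lper D t) k n)).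

Definition P_obj (x : opvars R I J K Z W) (y : plvars R J K Z) : R :=
  \sum_(1 <= t < T.+1) (1 - gamma D) ^+ t.-1 *
     (CPL y t + \sum_(w in Om t) prob D w * COP x w t).

Definition PMI_feasible (x : opvars R I J K Z W) (y : mivars R J K Z) : Prop :=
  op_feasible x /\
  (forall z l j, (1 <= l <= L)%N ->
     (nREC y z l j < NREC D l)%N /\ 0 <= yRECp y z l j <= uREC D) /\
  (forall z l k, (1 <= l <= L)%N -> k \in KCP D ->
     (nCPi y z l k < NCP D l k)%N /\ 0 <= yCPp y z l k <= uCP D) /\
  (forall t w z j, (1 <= t <= T)%N -> w \in Om t ->
     \sum_i xRBRM x w z t i j
       <= uREC D * (nREC y z (lper D t) j)%:R + yRECp y z (lper D t) j) /\
  (forall t w z k, (1 <= t <= T)%N -> w \in Om t -> k \in KCP D ->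
     xCPINV x w z t k
       <= uCP D * (nCPi y z (lper D t) k)%:R + yCPp y z (lper D t) k) /\
  (forall z l j, (2 <= l <= L)%N ->
     uREC D * (nREC y z l.-1 j)%:R + yRECp y z l.-1 j
       <= uREC D * (nREC y z l j)%:R + yRECp y z l j) /\
  (forall z l k, (2 <= l <= L)%N -> k \in KCP D ->
     uCP D * (nCPi y z l.-1 k)%:R + yCPp y z l.-1 k
       <= uCP D * (nCPi y z l k)%:R + yCPp y z l k).

Definition CPLbar (y : mivars R J K Z) (t : nat) : R :=
  \sum_z (\sum_j (fREC D z j (yRECp y z (lper D t) j)
                  + (nREC y z (lper D t) j)%:R * fREC D z j (uREC D))
        + \sum_(k in KCP D) (fCP D z k (yCPp y z (lper D t) k)
                  + (nCPi y z (lper D t) k)%:R * fCP D z k (uCP D))).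

Definition PMI_obj (x : opvars R I J K Z W) (y : mivars R J K Z) : R :=
  \sum_(1 <= t < T.+1) (1 - gamma D) ^+ t.-1 *
     (CPLbar y t + \sum_(w in Om t) prob D w * COP x w t).

(* Optimal values: infima in the extended reals (+oo if infeasible). *)
Definition P_value : \bar R :=
  ereal_inf [set v | exists x y, P_feasible x y /\ v = (P_obj x y)%:E].

Definition PMI_value : \bar R :=
  ereal_inf [set v | exists x y, PMI_feasible x y /\ v = (PMI_obj x y)%:E].

End Problems.

Definition concave_on_nonneg (R : realType) (f : R -> R) : Prop :=
  forall x y a : R, 0 <= x -> 0 <= y -> 0 <= a <= 1 ->
    a * f x + (1 - a) * f y <= f (a * x + (1 - a) * y).

Definition nondecr_on_nonneg (R : realType) (f : R -> R) : Prop :=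
  forall x y : R, 0 <= x -> x <= y -> f x <= f y.

(* Main.v *)
Require Import Defs.
From mathcomp Require Import all_boot all_order all_algebra.
From mathcomp Require Import boolp classical_sets reals constructive_ereal ereal.
From mathcomp Require Import ring lra.
Local Open Scope classical_set_scope.
Import Order.TTheory GRing.Theory Num.Theory.
Local Open Scope ring_scope.
Set Implicit Arguments. Unset Strict Implicit.

Section Helpers.
Variable R : realType.

Lemma transfer1 (f : R -> R) a b : concave_on_nonneg f -> f 0 = 0 ->
  0 <= a -> 0 <= b -> f (a + b) <= f a + f b.
Proof.
move=> cf f0 a0 b0.
have [s0|sp] := eqVneq (a + b) 0.
  have ea : a = 0 by lra.
  have eb : b = 0 by lra.
  by rewrite ea eb addr0 f0 addr0.
have spos : 0 < a + b by rewrite lt0r sp /=; lra.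
have s0' : a + b != 0 by [].
have H1 := cf (a + b) 0 (a / (a + b)) (ltW spos) (lexx 0).
have H2 := cf (a + b) 0 (b / (a + b)) (ltW spos) (lexx 0).
have ha : 0 <= a / (a + b) <= 1.
  apply/andP; split; first by apply: divr_ge0 => //; lra.
  by rewrite ler_pdivrMr // mul1r; lra.
have hb : 0 <= b / (a + b) <= 1.
  apply/andP; split; first by apply: divr_ge0 => //; lra.
  by rewrite ler_pdivrMr // mul1r; lra.
have {H1}H1 := H1 ha; have {H2}H2 := H2 hb.
have ea : a / (a + b) * (a + b) + (1 - a / (a + b)) * 0 = a by field.
have eb : b / (a + b) * (a + b) + (1 - b / (a + b)) * 0 = b by field.
rewrite ea f0 in H1; rewrite eb f0 in H2.
have es : f (a + b) = a / (a + b) * f (a + b) + b / (a + b) * f (a + b).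
  by rewrite -mulrDl -mulrDl divff // mul1r.
rewrite {1}es; lra.
Qed.

Lemma transfer2 (f : R -> R) u a b : concave_on_nonneg f ->
  0 <= a <= u -> 0 <= b <= u -> u < a + b -> f u + f (a + b - u) <= f a + f b.
Proof.
move=> cf /andP[a0 au] /andP[b0 bu] sab.
have [d0|dn] := eqVneq (2 * u - a - b) 0.
  have ea : a = u by lra.
  have eb : b = u by lra.
  by rewrite ea eb addrK.
have dpos : 0 < 2 * u - a - b by rewrite lt0r dn /=; lra.
set al := (u - b) / (2 * u - a - b).
have hal : 0 <= al <= 1.
  apply/andP; split; first by apply: divr_ge0; lra.
  by rewrite /al ler_pdivrMr // mul1r; lra.
have hal' : 0 <= 1 - al <= 1 by lra.
have u0 : 0 <= u by lra.
have v0 : 0 <= a + b - u by lra.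
have H1 := cf u (a + b - u) al u0 v0 hal.
have H2 := cf u (a + b - u) (1 - al) u0 v0 hal'.
have ea : al * u + (1 - al) * (a + b - u) = a by rewrite /al; field.
have eb : (1 - al) * u + (1 - (1 - al)) * (a + b - u) = b by rewrite /al; field.
rewrite ea in H1; rewrite eb in H2.
lra.
Qed.

Fixpoint gst (u : R) (y : nat -> R) (n : nat) : nat * R :=
  if n is n'.+1 then
    let p := gst u y n' in
    if p.2 + y n <= u then (p.1, p.2 + y n) else (p.1.+1, p.2 + y n - u)
  else (0%N, 0).

Lemma gst_inv (f : R -> R) u y n : concave_on_nonneg f -> f 0 = 0 -> 0 < u ->
  (forall i, (1 <= i <= n)%N -> 0 <= y i <= u) ->
  [/\ ((gst u y n).1 <= n.-1)%N, 0 <= (gst u y n).2 <= u,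
      u * ((gst u y n).1)%:R + (gst u y n).2 = \sum_(1 <= i < n.+1) y i &
      f (gst u y n).2 + ((gst u y n).1)%:R * f u <= \sum_(1 <= i < n.+1) f (y i)].
Proof.
move=> cf f0 u0; elim: n => [|n IH] hy.
  rewrite /= big_geq // big_geq // f0 mulr0 mul0r !addr0; split => //; lra.
have [IH1 IH2 IH3 IH4] : [/\ ((gst u y n).1 <= n.-1)%N, 0 <= (gst u y n).2 <= u,
      u * ((gst u y n).1)%:R + (gst u y n).2 = \sum_(1 <= i < n.+1) y i &
      f (gst u y n).2 + ((gst u y n).1)%:R * f u <= \sum_(1 <= i < n.+1) f (y i)].
  by apply: IH => i /andP[i1 i2]; apply: hy; rewrite i1 /= ltnW.
have /andP[y0 yu] : 0 <= y n.+1 <= u by apply: hy; rewrite /= ltnSn.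
rewrite [\sum_(1 <= i < n.+2) y i]big_nat_recr // [\sum_(1 <= i < n.+2) f (y i)]big_nat_recr //=.
move: IH1 IH2 IH3 IH4.
case: (gst u y n) => m r /= IH1 /andP[r0 ru] IH3 IH4.
case: ifP => hle /=.
  split.
  - by apply: leq_trans IH1 _; rewrite leq_pred.
  - by lra.
  - by rewrite -IH3; lra.
  - have := @transfer1 f r (y n.+1) cf f0 r0 y0; lra.
have hgt : u < r + y n.+1 by rewrite ltNge hle.
split.
- have [n0|npos] := posnP n.
    exfalso; move: IH1 IH3; rewrite n0 leqn0 => /eqP ->.
    by rewrite mulr0 add0r big_geq // => er; lra.
  by rewrite -(prednK npos) ltnS.
- by lra.
- by rewrite -IH3 -natr1 mulrDr mulr1; lra.
- have := @transfer2 f u r (y n.+1) cf (introT andP (conj r0 ru)) (introT andP (conj y0 yu)) hgt.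
  rewrite -natr1 mulrDl mul1r; lra.
Qed.


Definition stepf (u r : R) (m n : nat) : R :=
  if (n <= m)%N then u else if n == m.+1 then r else 0.

Lemma sum_stepf_gen (g : R -> R) u r m N : g 0 = 0 ->
  \sum_(1 <= n < N.+1) g (stepf u r m n)
    = (minn N m)%:R * g u + (if (m < N)%N then g r else 0).
Proof.
move=> g0; elim: N => [|N IH].
  by rewrite big_geq // min0n ltn0 mul0r addr0.
rewrite big_nat_recr //= IH /stepf.
have [h1|h1] := leqP N.+1 m.
  rewrite (minn_idPl (ltnW h1)) ltnNge (ltnW h1) /= -natr1 mulrDl mul1r.
  by rewrite !addr0.
have [e|ne] := eqVneq N m.
  by rewrite e ltnn eqxx /= minnn addr0.
have hm : (m < N)%N by rewrite ltn_neqAle eq_sym ne /= -ltnS.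
by rewrite (minn_idPr (ltnW hm)) hm eqSS (negbTE ne) g0 addr0.
Qed.

Lemma sum_stepf (g : R -> R) u r m N : g 0 = 0 -> (m < N)%N ->
  \sum_(1 <= n < N.+1) g (stepf u r m n) = g r + m%:R * g u.
Proof.
move=> g0 mN; rewrite sum_stepf_gen // mN.
by rewrite (minn_idPr (ltnW mN)) addrC.
Qed.

Lemma sum_stepf_id u r m N : (m < N)%N ->
  \sum_(1 <= n < N.+1) stepf u r m n = u * m%:R + r.
Proof.
move=> mN; have := @sum_stepf (fun x => x) u r m N erefl mN => /= ->.
by rewrite addrC mulrC.
Qed.

End Helpers.

Theorem theorem2 (R : realType) (I J K Z W : finType) (Sg : Type)
    (D : instance R I J K Z W Sg) :
  wf_instance D ->
  data_nonneg D ->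
  0 < uREC D -> 0 < uCP D ->
  0 <= gamma D < 1 ->
  (forall z j, concave_on_nonneg (fREC D z j) /\ nondecr_on_nonneg (fREC D z j)
               /\ fREC D z j 0 = 0) ->
  (forall z k, concave_on_nonneg (fCP D z k) /\ nondecr_on_nonneg (fCP D z k)
               /\ fCP D z k 0 = 0) ->
  P_value D = PMI_value D.
Proof.
move=> [hlper [_ [_ [_ [_ [_ [_ [hNR [hNC _]]]]]]]]] _ uR uC /andP[g0 g1] hfR hfC.
have gpos : forall t, 0 <= (1 - gamma D) ^+ t by move=> t; apply: exprn_ge0; lra.
apply/eqP; rewrite eq_le; apply/andP; split.
- apply: le_ereal_inf_tmp => v [x [y [[hop [hb1 [hb2 [hc1 [hc2 [hm1 hm2]]]]]] ->]]].
  apply: ereal_inf_lbound.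
  exists x, (PlVars (fun z l j n => stepf (uREC D) (yRECp y z l j) (nREC y z l j) n)
                    (fun z l k n => stepf (uCP D) (yCPp y z l k) (nCPi y z l k) n)).
  split; last first.
    congr (_%:E); rewrite /P_obj /PMI_obj; apply: eq_big_nat => t ht.
    have hl := hlper t ht.
    congr (_ * (_ + _)); rewrite /CPL /CPLbar; apply: eq_bigr => z _.
    congr (_ + _).
      apply: eq_bigr => j _ /=.
      have [hmN _] := hb1 z (lper D t) j hl.
      by rewrite (@sum_stepf _ (fREC D z j)) //; case: (hfR z j) => _ [].
    apply: eq_bigr => k hk /=.
    have [hmN _] := hb2 z (lper D t) k hl hk.
    by rewrite (@sum_stepf _ (fCP D z k)) //; case: (hfC z k) => _ [].
  split; first exact: hop.
  split.
    move=> z l j n hl _ /=; have [_ /andP[r0 ru]] := hb1 z l j hl.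
    rewrite /stepf; case: ifP => _; first by rewrite lexx (ltW uR).
    by case: ifP => _; [rewrite r0 ru | rewrite lexx (ltW uR)].
  split.
    move=> z l k n hl hk _ /=; have [_ /andP[r0 ru]] := hb2 z l k hl hk.
    rewrite /stepf; case: ifP => _; first by rewrite lexx (ltW uC).
    by case: ifP => _; [rewrite r0 ru | rewrite lexx (ltW uC)].
  split.
    move=> t w z j ht hw /=; have [hmN _] := hb1 z (lper D t) j (hlper t ht).
    by rewrite sum_stepf_id //; apply: hc1.
  split.
    move=> t w z k ht hw hk /=; have [hmN _] := hb2 z (lper D t) k (hlper t ht) hk.
    by rewrite sum_stepf_id //; apply: hc2.
  have hlm : forall l, (2 <= l <= nL D)%N -> (1 <= l.-1 <= nL D)%N /\ (1 <= l <= nL D)%N.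
    by move=> l /andP[l2 lL]; case: l l2 lL => [|[|l]] //= l2 lL; rewrite ltnW.
  split.
    move=> z l j hl /=; have [h1 h2] := hlm l hl.
    have [hmN1 _] := hb1 z l.-1 j h1; have [hmN2 _] := hb1 z l j h2.
    by rewrite !sum_stepf_id //; apply: hm1.
  move=> z l k hl hk /=; have [h1 h2] := hlm l hl.
  have [hmN1 _] := hb2 z l.-1 k h1 hk; have [hmN2 _] := hb2 z l k h2 hk.
  by rewrite !sum_stepf_id //; apply: hm2.
- apply: le_ereal_inf_tmp => v [x [y [[hop [hb1 [hb2 [hc1 [hc2 [hm1 hm2]]]]]] ->]]].
  apply: ge_ereal_inf.
  pose gR z l j := gst (uREC D) (yREC y z l j) (NREC D l).
  pose gC z l k := gst (uCP D) (yCP y z l k) (NCP D l k).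
  have GR : forall z l j, (1 <= l <= nL D)%N ->
      [/\ ((gR z l j).1 < NREC D l)%N, 0 <= (gR z l j).2 <= uREC D,
      uREC D * ((gR z l j).1)%:R + (gR z l j).2
        = \sum_(1 <= i < (NREC D l).+1) yREC y z l j i &
      fREC D z j (gR z l j).2 + ((gR z l j).1)%:R * fREC D z j (uREC D)
        <= \sum_(1 <= i < (NREC D l).+1) fREC D z j (yREC y z l j i)].
    move=> z l j hl; have [cf [_ f0]] := hfR z j.
    have [i1 i2 i3 i4] := @gst_inv _ (fREC D z j) (uREC D) (yREC y z l j) (NREC D l)
       cf f0 uR (hb1 z l j ^~ hl).
    split => //; by rewrite -(prednK (hNR l hl)) ltnS.
  have GC : forall z l k, (1 <= l <= nL D)%N -> k \in KCP D ->
      [/\ ((gC z l k).1 < NCP D l k)%N, 0 <= (gC z l k).2 <= uCP D,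
      uCP D * ((gC z l k).1)%:R + (gC z l k).2
        = \sum_(1 <= i < (NCP D l k).+1) yCP y z l k i &
      fCP D z k (gC z l k).2 + ((gC z l k).1)%:R * fCP D z k (uCP D)
        <= \sum_(1 <= i < (NCP D l k).+1) fCP D z k (yCP y z l k i)].
    move=> z l k hl hk; have [cf [_ f0]] := hfC z k.
    have [i1 i2 i3 i4] := @gst_inv _ (fCP D z k) (uCP D) (yCP y z l k) (NCP D l k)
       cf f0 uC (fun n hn => hb2 z l k n hl hk hn).
    split => //; by rewrite -(prednK (hNC l k hl hk)) ltnS.
  exists (PMI_obj D x (MiVars (fun z l j => (gR z l j).1) (fun z l j => (gR z l j).2)
                            (fun z l k => (gC z l k).1) (fun z l k => (gC z l k).2)))%:E.
    exists x, (MiVars (fun z l j => (gR z l j).1) (fun z l j => (gR z l j).2)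
                            (fun z l k => (gC z l k).1) (fun z l k => (gC z l k).2)).
    split => //.
    split; first exact: hop.
    split.
      by move=> z l j hl /=; have [] := GR z l j hl.
    split.
      by move=> z l k hl hk /=; have [] := GC z l k hl hk.
    split.
      move=> t w z j ht hw /=; have [_ _ -> _] := GR z (lper D t) j (hlper t ht).
      exact: hc1.
    split.
      move=> t w z k ht hw hk /=; have [_ _ -> _] := GC z (lper D t) k (hlper t ht) hk.
      exact: hc2.
    have hlm : forall l, (2 <= l <= nL D)%N -> (1 <= l.-1 <= nL D)%N /\ (1 <= l <= nL D)%N.
      by move=> l /andP[l2 lL]; case: l l2 lL => [|[|l]] //= l2 lL; rewrite ltnW.
    split.
      move=> z l j hl /=; have [h1 h2] := hlm l hl.
      have [_ _ -> _] := GR z l.-1 j h1; have [_ _ -> _] := GR z l j h2.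
      exact: hm1.
    move=> z l k hl hk /=; have [h1 h2] := hlm l hl.
    have [_ _ -> _] := GC z l.-1 k h1 hk; have [_ _ -> _] := GC z l k h2 hk.
    exact: hm2.
  rewrite lee_fin /P_obj /PMI_obj; apply: ler_sum_nat => t ht.
  have hl := hlper t ht.
  apply: ler_wpM2l; first exact: gpos.
  rewrite lerD2r /CPL /CPLbar; apply: ler_sum => z _.
  apply: lerD.
    by apply: ler_sum => j _ /=; have [_ _ _ ->] := GR z (lper D t) j hl.
  by apply: ler_sum => k hk /=; have [_ _ _ ->] := GC z (lper D t) k hl hk.
Qed.
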